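(* Let $G$ be a simple plane graph on $n\geq 2$ vertices that contains neither $K_4$ nor $C_5$ as a subgraph, and such that every maximal $2$-connected subgraph of $G$ has at most $4$ vertices. Then $e(G)\leq 2n-\frac{15}{7}$.
   Context: $K_4$ is the complete graph on $4$ vertices, $C_5$ the cycle on $5$ vertices; $e(G)$ is the number of edges of $G$. A maximal $2$-connected subgraph (a block) is understood in the usual sense, where a single edge (bridge) counts as a block on $2$ vertices. *)

(* Defs.v *)
From HB Require Import structures.
From mathcomp Require Import all_boot all_order all_algebra.
From mathcomp Require Import all_classical all_reals all_analysis.
From mathcomp Require Import Rstruct Rstruct_topology.
From Stdlib Require Import Rdefinitions.

Set Implicit Arguments.
Unset Strict Implicit.
Unset Printing Implicit Defensive.

Import Order.TTheory GRing.Theory Num.Theory.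

Definition simple_graph (T : finType) (e : rel T) : Prop :=
  symmetric e /\ irreflexive e.

Definition edge_set (T : finType) (e : rel T) : {set {set T}} :=
  [set E : {set T} | [exists x, exists y, e x y && (E == [set x; y])]].

Definition num_edges (T : finType) (e : rel T) : nat := #|edge_set e|.

Definition has_K4 (T : finType) (e : rel T) : Prop :=
  exists f : 'I_4 -> T, injective f /\ forall i j : 'I_4, i != j -> e (f i) (f j).

Definition has_C5 (T : finType) (e : rel T) : Prop :=
  exists f : 'I_5 -> T, injective f /\
    forall i : 'I_5, e (f i) (f (inord ((i.+1) %% 5) : 'I_5)).

Definition induced_connected (T : finType) (e : rel T) (S : {set T}) : bool :=
  [forall x in S, forall y in S,
     connect [rel a b | [&& e a b, a \in S & b \in S]] x y].

(* G[S] is 2-connected in the block sense: at least 2 vertices, connected,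
   and without a cut vertex (so K_2, i.e. a bridge, qualifies). *)
Definition biconnected (T : finType) (e : rel T) (S : {set T}) : bool :=
  [&& 1 < #|S|, induced_connected e S &
      [forall v in S, induced_connected e (S :\ v)]].

(* A block: a maximal 2-connected subgraph (bridges included). Maximal
   2-connected subgraphs are induced, so they are described by vertex sets. *)
Definition is_block (T : finType) (e : rel T) (S : {set T}) : Prop :=
  biconnected e S /\ forall S' : {set T}, S \proper S' -> ~~ biconnected e S'.

Definition plane := (R * R)%type.

Local Open Scope classical_set_scope.
Local Open Scope ring_scope.

Definition jordan_arc (g : R -> plane) (a b : plane) : Prop :=
  {within `[0%R, 1%R], continuous g} /\
  {in `[0%R, 1%R] &, injective g} /\ g 0 = a /\ g 1 = b.

Definition plane_embedding (T : finType) (e : rel T)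
    (pos : T -> plane) (arc : T -> T -> R -> plane) : Prop :=
  injective pos /\
  (forall x y, e x y -> jordan_arc (arc x y) (pos x) (pos y)) /\
  (forall x y w (s : R), e x y -> 0 < s < 1 -> arc x y s != pos w) /\
  (forall x y u v (s t : R), e x y -> e u v -> [set x; y] != [set u; v] ->
      0 < s < 1 -> 0 < t < 1 -> arc x y s != arc u v t).

Definition planar (T : finType) (e : rel T) : Prop :=
  exists pos arc, @plane_embedding T e pos arc.

(* Main.v *)
Require Import Defs.
From mathcomp Require Import all_boot all_order all_algebra.
From mathcomp Require Import all_classical all_reals all_analysis.
From mathcomp Require Import Rstruct Rstruct_topology.
From Stdlib Require Import Rdefinitions.
From mathcomp Require Import zify ring lra.

Import Order.TTheory GRing.Theory Num.Theory.

Section Aux.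
Local Open Scope nat_scope.
Variables (T : finType) (e : rel T).
Hypothesis (esym : symmetric e) (eirr : irreflexive e).

Definition isE (E : {set T}) := E \in edge_set e.
Definition eS (X : {set T}) := #|[set E | isE E && (E \subset X)]|.

Lemma edge_card E : isE E -> #|E| = 2.
Proof.
rewrite /isE inE => /existsP[x /existsP[y /andP[exy /eqP ->]]].
rewrite cards2; case: eqP => // xy; by rewrite xy eirr in exy.
Qed.

Lemma edge_pair x y : x != y -> isE [set x; y] = e x y.
Proof.
move=> nxy; apply/idP/idP; last first.
  by move=> exy; rewrite /isE inE; apply/existsP; exists x; apply/existsP; exists y; rewrite exy eqxx.
rewrite /isE inE => /existsP[a /existsP[b /andP[eab /eqP E]]].
have xin : x \in [set a; b] by rewrite -E !inE eqxx.
have yin : y \in [set a; b] by rewrite -E !inE eqxx orbT.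
move: xin yin nxy; rewrite !inE => /orP[]/eqP-> /orP[]/eqP->; rewrite ?eqxx //.
by rewrite esym.
Qed.

Lemma eS_bound (X : {set T}) : eS X <= 'C(#|X|, 2).
Proof.
rewrite -(cards_draws X 2) /eS; apply: subset_leq_card; apply/fintype.subsetP => E.
by rewrite !inE => /andP[/edge_card -> ->].
Qed.

Lemma eS_split (S A B : {set T}) : A :|: B = S -> #|A :&: B| <= 1 ->
  (forall x y, x \in S -> y \in S -> e x y ->
     (x \in A) && (y \in A) || (x \in B) && (y \in B)) ->
  eS S = eS A + eS B.
Proof.
move=> AB AB1 H; rewrite /eS.
have -> : [set E | isE E && (E \subset S)] =
  [set E | isE E && (E \subset A)] :|: [set E | isE E && (E \subset B)].
  apply/setP => E; rewrite !inE; case Ee: (isE E) => //=.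
  apply/idP/idP; last first.
    rewrite -AB; case/orP => sE'.
      by apply: subsetU; rewrite sE'.
    by apply: subsetU; rewrite sE' orbT.
  move: Ee; rewrite /isE inE => /existsP[x /existsP[y /andP[exy /eqP ->]]].
  rewrite finset.subUset !finset.sub1set => /andP[xS yS].
  by case/orP: (H x y xS yS exy) => /andP[xa ya]; rewrite !finset.subUset !finset.sub1set xa ya ?orbT.
rewrite cardsU.
suff -> : [set E | isE E && (E \subset A)] :&: [set E | isE E && (E \subset B)] = finset.set0.
  by rewrite cards0 subn0.
apply/setP => E; rewrite !inE; apply/negP => /and3P[/andP[Ee sA] _ sB].
have : E \subset A :&: B by rewrite finset.subsetI sA.
move/subset_leq_card; rewrite (edge_card _ Ee) => h.
by have := leq_trans h AB1.
Qed.

Lemma eS_small (X : {set T}) : #|X| <= 1 -> eS X = 0.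
Proof. move=> h; have := eS_bound X; case: #|X| h => [|[|]]//= _; by rewrite leqn0 => /eqP. Qed.

Definition rX (X : {set T}) := [rel a b | [&& e a b, a \in X & b \in X]].

Lemma disc_split (X : {set T}) : ~~ induced_connected e X ->
  exists A B, [/\ A :|: B = X, A :&: B = finset.set0, A != finset.set0, B != finset.set0 &
     forall x y, x \in X -> y \in X -> e x y -> (x \in A) = (y \in A)].
Proof.
move=> /forall_inPn[x xX /forall_inPn[y yX nc]].
pose A := [set z in X | connect (rX X) x z].
have hA : forall a b, a \in X -> b \in X -> e a b -> a \in A -> b \in A.
  move=> a b aX bX eab; rewrite !inE aX bX /= => ca.
  apply: connect_trans ca (connect1 _); by rewrite /= eab aX bX.
have xA : x \in A by rewrite inE xX connect0.
have yA : y \notin A by rewrite inE yX.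
have AX : A \subset X by apply/fintype.subsetP => z; rewrite inE => /andP[].
clearbody A.
exists A, (X :\: A); split.
- apply/setP => z; rewrite !inE; case zA: (z \in A) => //=.
  by rewrite (fintype.subsetP AX z zA).
- by apply/setP => z; rewrite !inE; case: (z \in A).
- by apply/set0Pn; exists x.
- by apply/set0Pn; exists y; rewrite !inE yX andbT.
- move=> a b aX bX eab; apply/idP/idP; first exact: hA.
  by apply: hA => //; rewrite esym.
Qed.

Hypothesis noK4 : ~ has_K4 e.

Lemma four (X : {set T}) : #|X| = 4 -> eS X <= 5.
Proof.
move=> X4; have := eS_bound X; rewrite X4 leq_eqVlt => /orP[/eqP h|]//.
exfalso; apply: noK4.
have eq6 : [set E | isE E && (E \subset X)] = [set B : {set T} | B \subset X & #|B| == 2].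
  apply/eqP; rewrite eqEcard cards_draws X4 -h /eS leqnn andbT.
  by apply/fintype.subsetP => E; rewrite !inE => /andP[/edge_card -> ->].
have hc : 4 = #|X| by [].
exists (fun i => enum_val (cast_ord hc i)); split.
  by move=> i j /enum_val_inj /cast_ord_inj.
move=> i j nij.
set a := enum_val _; set b := enum_val _.
have nab : a != b by apply: contra nij => /eqP /enum_val_inj /cast_ord_inj ->.
rewrite -edge_pair //.
have : [set a; b] \in [set B : {set T} | B \subset X & #|B| == 2].
  by rewrite inE cards2 nab finset.subUset !finset.sub1set !enum_valP.
by rewrite -eq6 inE => /andP[].
Qed.

Hypothesis blocks : forall S : {set T}, is_block e S -> #|S| <= 4.

Lemma bic_small (S : {set T}) : biconnected e S -> #|S| <= 4.
Proof.
move=> bS.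
have P0 : (fun S' : {set T} => biconnected e S' && (S \subset S')) S by rewrite /= bS subxx.
case: (@arg_maxnP _ S (fun S' : {set T} => biconnected e S' && (S \subset S')) (fun S' : {set T} => #|S'|) P0) => M /andP[bM sM] mx.
apply: leq_trans (subset_leq_card sM) _; apply: blocks; split => // S' pS'.
apply/negP => bS'; have := mx S'; rewrite bS' (fintype.subset_trans sM (proper_sub pS')) => /(_ isT).
move=> /= h; move: (proper_card pS'); by rewrite ltnNge h.
Qed.

Lemma main_ind n (S : {set T}) : #|S| < n -> 2 <= #|S| -> eS S + 3 <= 2 * #|S|.
Proof.
elim: n S => [|n IH] S //; rewrite ltnS => Sn S2.
have Q : forall X : {set T}, #|X| < #|S| -> 1 <= #|X| -> eS X + 2 <= 2 * #|X|.
  move=> X lX X1; case: (leqP #|X| 1) => h.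
    by rewrite eS_small //; lia.
  have := IH X (leq_trans lX Sn) h; lia.
case: (boolP (biconnected e S)) => bS.
  have := four S; have := bic_small S bS; have := eS_bound S; move: S2.
  case: #|S| => [|[|[|[|[|k]]]]] //=.
  - by rewrite bin2; lia.
  - by rewrite bin2; lia.
  - move=> _ _ _ /(_ erefl); lia.
move: bS; rewrite /biconnected S2 /= negb_and => /orP[nc|].
  have [A [B [AB AB0 A0 B0 H]]] := disc_split _ nc.
  have cS : #|S| = #|A| + #|B| by rewrite -AB cardsU AB0 cards0 subn0.
  rewrite (@eS_split S A B) //; first last.
  - move=> x y xS yS exy.
    have xAB : x \in A :|: B by rewrite AB.
    have yAB : y \in A :|: B by rewrite AB.
    move: xAB yAB; rewrite !inE (H x y xS yS exy); by case: (y \in A) => //= -> ->.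
  - by rewrite AB0 cards0.
  - have := Q A; have := Q B; rewrite -!card_gt0 in A0 B0; lia.
case/forall_inPn => v vS nc.
have [A [B [AB AB0 A0 B0 H]]] := disc_split _ nc.
have vA : v \notin A.
  apply/negP => vA; have : v \in S :\ v by rewrite -AB inE vA.
  by rewrite !inE eqxx.
have vB : v \notin B.
  apply/negP => vB; have : v \in S :\ v by rewrite -AB inE vB orbT.
  by rewrite !inE eqxx.
have cS : #|S| = (#|A| + #|B|).+1.
  by rewrite (cardsD1 v S) vS -AB cardsU AB0 cards0 subn0.
have cA : #|v |: A| = #|A|.+1 by rewrite cardsU1 vA.
have cB : #|v |: B| = #|B|.+1 by rewrite cardsU1 vB.
rewrite (@eS_split S (v |: A) (v |: B)).
- have := IH (v |: A); have := IH (v |: B); rewrite cA cB cS.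
  rewrite -!card_gt0 in A0 B0; lia.
- apply/setP => z; rewrite !inE; case: (eqVneq z v) => [->|zv]; first by rewrite vS.
  have := congr1 (fun X : {set T} => z \in X) AB; rewrite /= !inE zv /= => <-.
  by case: (z \in A); case: (z \in B).
- apply: leq_trans (_ : #|[set v]| <= 1); last by rewrite cards1.
  apply: subset_leq_card; apply/fintype.subsetP => z; rewrite !inE.
  case: (z == v) => //=; move/setP: AB0 => /(_ z); by rewrite !inE => ->.
- move=> x y xS yS exy; rewrite !inE.
  case: (eqVneq x v) => [xv|xv]; case: (eqVneq y v) => [yv|yv] /=.
  + by rewrite xv yv eirr in exy.
  + have : y \in S :\ v by rewrite !inE yv.
    by rewrite -AB inE => /orP[]->; rewrite ?orbT.
  + have : x \in S :\ v by rewrite !inE xv.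
    by rewrite -AB inE => /orP[]->; rewrite ?orbT.
  + have xS' : x \in S :\ v by rewrite !inE xv.
    have yS' : y \in S :\ v by rewrite !inE yv.
    have hx := H x y xS' yS' exy; move: xS' yS'; rewrite -AB !inE hx andbb.
    by case: (y \in A) => //= -> ->.
Qed.

End Aux.

Local Open Scope ring_scope.

Theorem corollary2 (T : finType) (e : rel T) :
  simple_graph e ->
  planar e ->
  (2 <= #|T|)%nat ->
  ~ has_K4 e ->
  ~ has_C5 e ->
  (forall S : {set T}, is_block e S -> (#|S| <= 4)%nat) ->
  ((num_edges e)%:R : R) <= 2 * (#|T|)%:R - 15%:R / 7%:R.
Proof.
move=> [es ei] _ T2 nK4 _ bl.
have h := @main_ind T e es ei nK4 bl (#|T|.+1) [set: T].
rewrite cardsT in h; have {h} := h (ltnSn _) T2.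
have -> : @eS T e [set: T] = num_edges e.
  by rewrite /eS /num_edges; apply: eq_card => E; rewrite [in LHS]inE finset.subsetT andbT.
move=> h.
have h' : ((num_edges e)%:R : R) + 3 <= 2 * (#|T|)%:R.
  by rewrite -[3]/(3%:R) -natrD -[2]/(2%:R) -natrM ler_nat.
have : (15%:R / 7%:R : R) <= 3.
  by rewrite ler_pdivrMr ?ltr0n // -natrM ler_nat.
lra.
Qed.
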